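(* For each $m \ge 2$ let $(r_m,p_m,s_m)$ be the probabilities of playing $R,P,S$ in a symmetric Nash equilibrium of the imbalanced $(m,3)$-RPS. Then as $m\to\infty$, $\max(r_m,p_m,s_m) \to 1$ (and the other two probabilities tend to $0$); that is, the symmetric Nash equilibrium probability vectors converge, up to permutation of coordinates, to a point mass, which majorizes every probability vector on three objects.
   Context: An $(m,n)$-RPS game is a symmetric, zero-sum, win/lose game with $m$ players and $n$ pure strategies (''objects''), played without collusion. The rules assign to every multiset $c$ of $m$ chosen objects a single winning object $\phi(c)\in c$; every player who chose $\phi(c)$ wins and every other player loses. If there are $m'$ winners, each winner receives payoff $\frac{m-m'}{m'}$ and each loser receives payoff $-1$. A symmetric Nash equilibrium is a mixed-strategy Nash equilibrium in which all players use the same probability distribution over objects. The imbalanced $(m,3)$-RPS has objects $R,P,S$ with the following rules: any multiset containing at least one $S$ and at least one $R$ is won by $R$; any multiset containing only $R$'s and $P$'s (with at least one of each) is won by $P$; any multiset containing only $P$'s and $S$'s (with at least one of each) is won by $S$; a multiset consisting of a single object type is won by that object. *)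

(* Defs.v *)
From HB Require Import structures.
From mathcomp Require Import all_boot all_order all_algebra.
From mathcomp Require Import all_classical all_reals all_analysis.
Set Implicit Arguments. Unset Strict Implicit. Unset Printing Implicit Defensive.
Import Order.TTheory GRing.Theory Num.Theory.
Local Open Scope ring_scope.

Definition obR : 'I_3 := @Ordinal 3 0 isT.
Definition obP : 'I_3 := @Ordinal 3 1 isT.
Definition obS : 'I_3 := @Ordinal 3 2 isT.

Definition profile (m : nat) := {ffun 'I_m -> 'I_3}.

Definition cnt (m : nat) (c : profile m) (k : 'I_3) : nat :=
  #|[set i | c i == k]|.

Definition winner (m : nat) (c : profile m) : 'I_3 :=
  let hasR := (0 < cnt c obR)%N in
  let hasP := (0 < cnt c obP)%N in
  let hasS := (0 < cnt c obS)%N in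
  if hasS && hasR then obR
  else if hasR && hasP then obP
  else if hasP && hasS then obS
  else if hasR then obR
  else if hasP then obP
  else obS.

Definition payoff (R : realType) (m : nat) (c : profile m) (i : 'I_m) : R :=
  let w := winner c in
  let m' := cnt c w in
  if c i == w then (m - m')%:R / m'%:R else -1.

Definition is_mixed (R : realType) (s : 'I_3 -> R) : Prop :=
  (forall k, 0 <= s k) /\ \sum_k s k = 1.

Definition exp_payoff (R : realType) (m : nat) (i : 'I_m)
    (tau sigma : 'I_3 -> R) : R :=
  \sum_(c : profile m)
     (tau (c i) * \prod_(j < m | j != i) sigma (c j)) * payoff R c i.

Definition symNE (R : realType) (m : nat) (sigma : 'I_3 -> R) : Prop :=
  is_mixed sigma /\
  forall (i : 'I_m) (tau : 'I_3 -> R), is_mixed tau ->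
    exp_payoff i tau sigma <= exp_payoff i sigma sigma.

(* Main.v *)
Require Import Defs.
From HB Require Import structures.
From mathcomp Require Import all_boot all_order all_algebra.
From mathcomp Require Import all_classical all_reals all_analysis.
From mathcomp Require Import zify ring lra.
Import Order.TTheory GRing.Theory Num.Theory.
Import numFieldNormedType.Exports.
Local Open Scope classical_set_scope.
Local Open Scope ring_scope.

Section A.
Variable R : realType.
Variable m : nat.
Hypothesis m0 : (0 < m)%N.

Lemma L1 (F : 'I_m -> 'I_3 -> R) :
  \sum_(c : profile m) \prod_j F j (c j) = \prod_j \sum_x F j x.
Proof. by rewrite bigA_distr_bigA. Qed.

Lemma sum3 (f : 'I_3 -> R) : \sum_x f x = f obR + f obP + f obS.
Proof.
rewrite !big_ord_recl big_ord0 addr0 addrA.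
by congr (f _ + f _ + f _); apply: val_inj.
Qed.

Lemma cnt_pos (c : profile m) k : (0 < cnt c k)%N = [exists j, c j == k].
Proof.
apply/card_gt0P/existsP => -[j hj]; exists j; move: hj; by rewrite inE.
Qed.

Lemma cntE (c : profile m) k : (cnt c k)%:R = \sum_i (c i == k)%:R :> R.
Proof.
rewrite (eq_bigr (fun i => if c i == k then 1 else 0)); last first.
  by move=> i _; case: (c i == k).
rewrite -big_mkcond /= sumr_const /cnt cardsE.
by rewrite -[LHS]mulr1 mulr_natl.
Qed.

Lemma sum_ind (k : 'I_3) (f : 'I_3 -> R) : \sum_x f x * (x == k)%:R = f k.
Proof.
rewrite (bigD1 k) //= eqxx mulr1 big1 ?addr0 // => x /negbTE ->.
by rewrite mulr0.
Qed.

Lemma some_ex (c : profile m) :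
  [exists j, c j == obR] || [exists j, c j == obP] || [exists j, c j == obS].
Proof.
have i0 : 'I_m := Ordinal m0.
suff : (c i0 == obR) || (c i0 == obP) || (c i0 == obS).
  case/orP => [/orP[]|] h.
  - by apply/orP; left; apply/orP; left; apply/existsP; exists i0.
  - by apply/orP; left; apply/orP; right; apply/existsP; exists i0.
  - by apply/orP; right; apply/existsP; exists i0.
by case: (c i0) => [[|[|[|?]]] ?].
Qed.

Lemma winner_in (c : profile m) : (0 < cnt c (winner c))%N.
Proof.
have := some_ex c; rewrite /winner !cnt_pos.
by case hR: [exists j, c j == obR]; case hP: [exists j, c j == obP];
   case hS: [exists j, c j == obS].
Qed.

Lemma sum_eq1 (a : 'I_3) : \sum_k (a == k)%:R = 1 :> R.
Proof.
rewrite (bigD1 a) //= eqxx big1 ?addr0 // => k.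
by rewrite eq_sym => /negbTE ->.
Qed.

Lemma cnt_le (c : profile m) k : (cnt c k <= m)%N.
Proof. by rewrite /cnt; apply: leq_trans (max_card _) _; rewrite card_ord. Qed.

Lemma sum_ind_pay (c : profile m) k :
  \sum_i (c i == k)%:R * payoff R c i
  = m%:R * (winner c == k)%:R - (cnt c k)%:R.
Proof.
rewrite /payoff /=.
have [->|nk] := eqVneq k (winner c).
  rewrite mulr1.
  rewrite (eq_bigr (fun i => (c i == winner c)%:R *
      ((m - cnt c (winner c))%:R / (cnt c (winner c))%:R))); last first.
    by move=> i _; case: (c i == winner c); rewrite ?mul0r.
  rewrite -big_distrl /= -cntE mulrCA mulfV ?mulr1 ?natrB ?cnt_le //.
  by rewrite pnatr_eq0 -lt0n winner_in.
rewrite mulr0n mulr0 sub0r (cntE c k) -sumrN; apply: eq_bigr => i _.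
case: eqP => [e|]; last by rewrite !mul0r oppr0.
by rewrite e (negbTE nk) mul1r.
Qed.

Lemma sum_cnt (c : profile m) : \sum_k (cnt c k)%:R = m%:R :> R.
Proof.
under eq_bigr do rewrite cntE.
rewrite exchange_big /=.
under eq_bigr do rewrite sum_eq1.
by rewrite sumr_const card_ord.
Qed.

Lemma sum_pay (c : profile m) : \sum_i payoff R c i = 0.
Proof.
rewrite (eq_bigr (fun i => \sum_k (c i == k)%:R * payoff R c i)); last first.
  by move=> i _; rewrite -big_distrl /= sum_eq1 mul1r.
rewrite exchange_big /=.
under eq_bigr do rewrite sum_ind_pay.
rewrite sumrB -mulr_sumr sum_cnt.
rewrite (eq_bigr (fun k => (winner c == k)%:R)) // sum_eq1.
by rewrite mulr1 subrr.
Qed.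

Definition G (sg : 'I_3 -> R) (c : profile m) := \prod_j sg (c j).
Definition W (sg : 'I_3 -> R) k := \sum_(c : profile m) G sg c * (winner c == k)%:R.
Definition ind (k : 'I_3) : 'I_3 -> R := fun x => (x == k)%:R.

Lemma GE (sg : 'I_3 -> R) (c : profile m) i :
  G sg c = sg (c i) * \prod_(j < m | j != i) sg (c j).
Proof. by rewrite /G (bigD1 i). Qed.

Lemma expE_ind (sg : 'I_3 -> R) i k :
  sg k * exp_payoff i (ind k) sg
  = \sum_(c : profile m) (c i == k)%:R * (G sg c * payoff R c i).
Proof.
rewrite /exp_payoff mulr_sumr; apply: eq_bigr => c _.
rewrite (GE sg c i) /ind.
case: eqP => [->|_]; last by rewrite !mul0r mulr0.
by rewrite !mul1r mulrA.
Qed.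

Lemma expE_sg (sg : 'I_3 -> R) i :
  exp_payoff i sg sg = \sum_(c : profile m) G sg c * payoff R c i.
Proof. by apply: eq_bigr => c _; rewrite (GE sg c i). Qed.

Lemma sumG_ind (sg : 'I_3 -> R) i k : \sum_x sg x = 1 ->
  \sum_(c : profile m) G sg c * (c i == k)%:R = sg k.
Proof.
move=> s1.
rewrite (eq_bigr (fun c : profile m => \prod_j
   (sg (c j) * (if j == i then (c j == k)%:R else 1)))); last first.
  move=> c _; rewrite big_split /=; congr (_ * _).
  rewrite (bigD1 i) //= eqxx big1 ?mulr1 // => j /negbTE -> //.
rewrite (L1 (fun j x => sg x * (if j == i then (x == k)%:R else 1))).
rewrite (bigD1 i) //= eqxx sum_ind big1 ?mulr1 // => j /negbTE ->.
by under eq_bigr do rewrite mulr1.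
Qed.

Lemma sumG (sg : 'I_3 -> R) : \sum_x sg x = 1 -> \sum_(c : profile m) G sg c = 1.
Proof.
by move=> s1; rewrite /G (L1 (fun _ x => sg x)); under eq_bigr do rewrite s1; rewrite prodr_const expr1n.
Qed.

Lemma W_le (sg : 'I_3 -> R) k : symNE m sg -> W sg k <= sg k.
Proof.
move=> [[sg0 sg1] NE].
have mix : is_mixed (ind k).
  split; first by move=> x; rewrite /ind ler0n.
  by rewrite -(sum_eq1 k); apply: eq_bigr => x _; rewrite /ind eq_sym.
have H : \sum_(i < m) sg k * exp_payoff i (ind k) sg <= \sum_(i < m) sg k * exp_payoff i sg sg.
  by apply: ler_sum => i _; rewrite ler_wpM2l // NE.
have R0 : \sum_(i < m) sg k * exp_payoff i sg sg = 0.
  under eq_bigr do rewrite expE_sg.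
  rewrite -mulr_sumr exchange_big /=.
  under [X in _ * X]eq_bigr do rewrite -mulr_sumr sum_pay mulr0.
  by rewrite big1 ?mulr0.
have L : \sum_(i < m) sg k * exp_payoff i (ind k) sg = m%:R * (W sg k - sg k).
  under eq_bigr do rewrite expE_ind.
  rewrite exchange_big /=.
  under eq_bigr => c _.
    rewrite (eq_bigr (fun i => G sg c * ((c i == k)%:R * payoff R c i))); last first.
      by move=> i _; rewrite mulrCA.
    rewrite -mulr_sumr sum_ind_pay mulrBr.
    over.
  rewrite /= sumrB.
  have -> : \sum_(c : profile m) G sg c * (cnt c k)%:R = m%:R * sg k.
    under eq_bigr do rewrite cntE mulr_sumr.
    rewrite exchange_big /=.
    under eq_bigr do rewrite sumG_ind //.
    by rewrite sumr_const card_ord mulr_natl.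
  rewrite mulrBr /W mulr_sumr; congr (_ - _); apply: eq_bigr => c _.
  by rewrite mulrCA.
move: H; rewrite R0 L pmulr_rle0 ?ltr0n // subr_le0 //.
Qed.

Lemma W_eq (sg : 'I_3 -> R) : symNE m sg -> forall k, W sg k = sg k.
Proof.
move=> ne; have [[sg0 sg1] _] := ne.
have sW : \sum_k W sg k = 1.
  rewrite /W exchange_big /=.
  under eq_bigr do rewrite -mulr_sumr sum_eq1 mulr1.
  exact: sumG.
have h : \sum_k (sg k - W sg k) = 0 by rewrite sumrB sg1 sW subrr.
move=> k; apply/eqP; rewrite eq_sym -subr_eq0; apply/eqP.
by apply: (psumr_eq0P _ h) => // i _; rewrite subr_ge0 W_le.
Qed.

Lemma prod_ind (b : 'I_m -> bool) : \prod_j (b j)%:R = [forall j, b j]%:R :> R.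
Proof.
case: (boolP [forall j, b j]) => [/forallP h|/forallP h].
  by rewrite big1 // => j _; rewrite h.
have [j hj] : exists j, ~~ b j.
  by apply/existsP; rewrite -negb_forall; apply/negP => /forallP.
by rewrite (bigD1 j) //= (negbTE hj) mul0r.
Qed.

Lemma sumprod (sg : 'I_3 -> R) (f : 'I_3 -> bool) :
  \sum_(c : profile m) G sg c * [forall j, f (c j)]%:R
  = (\sum_x sg x * (f x)%:R) ^+ m.
Proof.
rewrite (eq_bigr (fun c : profile m => \prod_j (sg (c j) * (f (c j))%:R))).
  by rewrite (L1 (fun _ x => sg x * (f x)%:R)) prodr_const card_ord.
by move=> c _; rewrite big_split /= prod_ind.
Qed.

Lemma allP_eq (c : profile m) : [forall j, c j == obP] =
  ~~ [exists j, c j == obR] && ~~ [exists j, c j == obS].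
Proof.
rewrite !negb_exists; apply/forallP/andP => [h|[/forallP h1 /forallP h2] j].
  by split; apply/forallP => j; rewrite (eqP (h j)).
by move: (h1 j) (h2 j); case: (c j) => [[|[|[|?]]] ?].
Qed.

Lemma allR_eq (c : profile m) : [forall j, c j == obR] =
  ~~ [exists j, c j == obP] && ~~ [exists j, c j == obS].
Proof.
rewrite !negb_exists; apply/forallP/andP => [h|[/forallP h1 /forallP h2] j].
  by split; apply/forallP => j; rewrite (eqP (h j)).
by move: (h1 j) (h2 j); case: (c j) => [[|[|[|?]]] ?].
Qed.

Lemma win_S (c : profile m) : (winner c == obS) =
  [forall j, c j != obR] && ~~ [forall j, c j == obP].
Proof.
have := some_ex c; rewrite allP_eq -negb_exists /winner !cnt_pos.
by case hR: [exists j, c j == obR]; case hP: [exists j, c j == obP];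
   case hS: [exists j, c j == obS].
Qed.

Lemma win_P (c : profile m) : (winner c == obP) =
  [forall j, c j != obS] && ~~ [forall j, c j == obR].
Proof.
have := some_ex c; rewrite allR_eq -negb_exists /winner !cnt_pos.
by case hR: [exists j, c j == obR]; case hP: [exists j, c j == obP];
   case hS: [exists j, c j == obS].
Qed.

Lemma ind_diff (a b : bool) : (b -> a) -> (a && ~~ b)%:R = a%:R - b%:R :> R.
Proof. case: a; case: b => //= h; rewrite ?subr0 ?subrr //; by have := h isT. Qed.

Lemma WS (sg : 'I_3 -> R) : W sg obS = (sg obP + sg obS) ^+ m - sg obP ^+ m.
Proof.
rewrite /W (eq_bigr (fun c : profile m => G sg c * [forall j, c j != obR]%:R
   - G sg c * [forall j, c j == obP]%:R)); last first.
  move=> c _; rewrite win_S ind_diff ?mulrBr // => /forallP h.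
  by apply/forallP => j; rewrite (eqP (h j)).
rewrite sumrB (sumprod sg (fun x => x != obR)) (sumprod sg (fun x => x == obP)).
by rewrite !sum3 /= !mulr0 !mulr1 ?add0r ?addr0.
Qed.

Lemma WP (sg : 'I_3 -> R) : W sg obP = (sg obR + sg obP) ^+ m - sg obR ^+ m.
Proof.
rewrite /W (eq_bigr (fun c : profile m => G sg c * [forall j, c j != obS]%:R
   - G sg c * [forall j, c j == obR]%:R)); last first.
  move=> c _; rewrite win_P ind_diff ?mulrBr // => /forallP h.
  by apply/forallP => j; rewrite (eqP (h j)).
rewrite sumrB (sumprod sg (fun x => x != obS)) (sumprod sg (fun x => x == obR)).
by rewrite !sum3 /= !mulr0 !mulr1 ?add0r ?addr0.
Qed.

End A.
Lemma bin2_mul n : ('C(n, 2) * 2 = n * n.-1)%N.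
Proof.
elim: n => [//|n IH]; rewrite binS bin1 mulnDl IH; case: n {IH} => //= n; lia.
Qed.

Lemma pow_gt n : (2 <= n)%N -> (n.+1 < 2 ^ n)%N.
Proof.
elim: n => [//|n IH]; case: n IH => [//|[//|n]] IH _.
rewrite expnS; have := IH isT; lia.
Qed.

Lemma xm_xx (R : realType) (x : R) m : (2 <= m)%N -> 0 <= x <= 1 -> x ^+ m = x ->
  x = 0 \/ x = 1.
Proof.
move=> hm /andP[x0 x1] e.
have [->|xn0] := eqVneq x 0; first by left.
have [->|xn1] := eqVneq x 1; first by right.
exfalso.
have xp : 0 < x by rewrite lt_neqAle eq_sym xn0.
have xl : x < 1 by rewrite lt_neqAle xn1.
have lt1 : x ^+ m.-1 < 1 by rewrite exprn_ilt1 // ?ltW //; case: m hm {e}=> [|[|]].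
move: e lt1; case: m hm => // m _; rewrite exprS /= => e.
have -> : x ^+ m = 1.
  by apply: (mulfI (x := x)); [rewrite xn0|rewrite e mulr1].
by rewrite ltxx.
Qed.

Lemma mvt (R : realType) (a b : R) m : 0 <= b <= a ->
  a ^+ m - b ^+ m <= (a - b) * (m%:R * a ^+ m.-1).
Proof.
move=> /andP[b0 ba]; rewrite subrXX ler_wpM2l ?subr_ge0 //.
have -> : m%:R * a ^+ m.-1 = \sum_(i < m) a ^+ m.-1.
  by rewrite sumr_const card_ord mulr_natl.
apply: ler_sum => i _.
have a0 : 0 <= a by apply: le_trans ba.
have -> : a ^+ m.-1 = a ^+ (m.-1 - i) * a ^+ i.
  by rewrite -exprD subnK //; have := ltn_ord i; lia.
by rewrite ler_wpM2l ?exprn_ge0 // lerXn2r // nnegrE.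
Qed.

Lemma bern2 (R : realType) (r : R) n : 0 <= r -> (2 <= n)%N ->
  'C(n, 2)%:R * r ^+ 2 <= (r + 1) ^+ n.
Proof.
move=> r0 hn; rewrite exprD1n (bigD1 (Ordinal (n:=n.+1) (m:=2) hn)) //=.
rewrite mulr_natl lerDl sumr_ge0 // => i _.
by rewrite mulrn_wge0 // exprn_ge0.
Qed.

Lemma keybound (R : realType) k (r p s : R) : 0 <= r -> 0 <= p -> 0 <= s ->
  r + p + s = 1 -> s = (p + s) ^+ k.+3 - p ^+ k.+3 ->
  p = (r + p) ^+ k.+3 - r ^+ k.+3 ->
  (1 - Num.max r (Num.max p s)) ^+ 2 * k.+1%:R <= 27.
Proof.
move=> r0 p0 s0 sum1 es ep.
set M := Num.max r (Num.max p s).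
have rM : r <= M by rewrite le_max lexx.
have pM : p <= M by rewrite !le_max lexx orbT.
have sM : s <= M by rewrite !le_max lexx !orbT.
have M1 : M <= 1 by rewrite !ge_max; apply/and3P; split; lra.
have done : M = 1 -> (1 - M) ^+ 2 * k.+1%:R <= 27.
  by move=> ->; rewrite subrr expr0n /= mul0r.
have [s0'|sp] := eqVneq s 0.
  have e1 : r + p = 1 by lra.
  move: ep; rewrite e1 expr1n => ep.
  have : r ^+ k.+3 = r by lra.
  case/xm_xx => //; first by apply/andP; split; lra.
  - move=> r00; apply: done; apply/le_anti; rewrite M1 /=; lra.
  - move=> r1; apply: done; apply/le_anti; rewrite M1 /=; lra.
have [p0'|pp] := eqVneq p 0.
  move: es; rewrite p0' add0r expr0n /= subr0 => es.
  have hs : 0 <= s <= 1 by apply/andP; split; lra.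
  case: (@xm_xx R s k.+3 isT hs (esym es)).
  - move=> s00; apply: done; apply/le_anti; rewrite M1 /=; lra.
  - move=> s1; apply: done; apply/le_anti; rewrite M1 /=; lra.
have spos : 0 < s by rewrite lt_neqAle eq_sym sp.
have ppos : 0 < p by rewrite lt_neqAle eq_sym pp.
have h1 : 1 <= k.+3%:R * (1 - r) ^+ k.+2.
  have hb : 0 <= p <= p + s by apply/andP; split; lra.
  have := @mvt _ _ _ k.+3 hb; rewrite -es.
  have -> : p + s - p = s by ring.
  have -> : p + s = 1 - r by lra.
  by rewrite -{1}[s]mulr1 (ler_pM2l spos).
have h2 : s < 2^-1.
  rewrite ltNge; apply/negP => hs.
  have hb : 0 <= r <= r + p by apply/andP; split; lra.
  have := @mvt _ _ _ k.+3 hb; rewrite -ep.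
  have -> : r + p - r = p by ring.
  rewrite -{1}[p]mulr1 (ler_pM2l ppos) /= => h.
  have rp : r + p <= 2^-1 by lra.
  have h' : (r + p) ^+ k.+2 <= 2^-1 ^+ k.+2.
    by rewrite lerXn2r // nnegrE; lra.
  have h'' : 1 <= k.+3%:R * 2^-1 ^+ k.+2 :> R.
    apply: (le_trans h); rewrite ler_wpM2l //.
  have : (2 ^+ k.+2 : R) <= k.+3%:R.
    have e : 2^-1 ^+ k.+2 * 2 ^+ k.+2 = 1 :> R.
      by rewrite -exprMn mulVf ?expr1n.
    have := ler_wpM2r (exprn_ge0 k.+2 (_ : 0 <= (2:R))) h''.
    by rewrite mul1r -mulrA e mulr1; apply; lra.
  by rewrite -natrX ler_nat leqNgt (@pow_gt k.+2 isT).
have h3 : s * (1 - s) <= r.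
  have : p <= (1 - s) ^+ k.+3.
    have -> : 1 - s = r + p by lra.
    by rewrite {1}ep lerBlDr lerDl exprn_ge0.
  have : (1 - s) ^+ k.+3 <= (1 - s) ^+ 2.
    by apply: ler_wiXn2l => //; lra.
  rewrite expr2; nra.
have h4 : s <= 2 * r by nra.
have r1 : r <= 1 by lra.
have h5 : (r + 1) ^+ k.+2 <= k.+3%:R.
  have e : (r + 1) ^+ k.+2 * (1 - r) ^+ k.+2 = (1 - r ^+ 2) ^+ k.+2.
    by rewrite -exprMn; congr (_ ^+ _); ring.
  have e1 : (1 - r ^+ 2) ^+ k.+2 <= 1.
    by apply: exprn_ile1; rewrite expr2; nra.
  apply: (le_trans (y := (r + 1) ^+ k.+2 * (k.+3%:R * (1 - r) ^+ k.+2))).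
    by rewrite ler_peMr // exprn_ge0 //; lra.
  by rewrite mulrCA e ler_piMr // exprn_ge0 // subr_ge0 expr2; nra.
have h6 := @bern2 _ r k.+2 r0 isT.
have h7 : 'C(k.+2, 2)%:R * 2 = k.+2%:R * k.+1%:R :> R.
  by have := congr1 (fun n => n%:R : R) (bin2_mul k.+2); rewrite /= !natrM.
set x : R := k%:R.
have x0 : 0 <= x by rewrite /x.
have e1 : k.+1%:R = x + 1 :> R by rewrite -addn1 natrD.
have e2 : k.+2%:R = x + 2 :> R by rewrite -addn2 natrD.
have e3 : k.+3%:R = x + 3 :> R by rewrite -addn3 natrD.
rewrite e1; rewrite e2 e1 in h7; rewrite e3 in h5.
set C := 'C(k.+2, 2)%:R in h6 h7.
have h8 : (x + 2) * ((x + 1) * r ^+ 2) <= (x + 2) * 3.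
  have -> : (x + 2) * ((x + 1) * r ^+ 2) = 2 * (C * r ^+ 2).
    by rewrite mulrA -h7; ring.
  lra.
have h9 : (x + 1) * r ^+ 2 <= 3.
  by rewrite -(ler_pM2l (_ : 0 < x + 2)) //; lra.
have h10 : 0 <= 1 - M <= 3 * r by apply/andP; split; lra.
have h11 : (1 - M) ^+ 2 <= 9 * r ^+ 2.
  move/andP: h10 => [a b]; rewrite !expr2; nra.
apply: (le_trans (y := 9 * r ^+ 2 * (x + 1))).
  by rewrite ler_wpM2r //; lra.
rewrite -mulrA [r ^+ 2 * _]mulrC; lra.
Qed.

Lemma bound_m (R : realType) (sigma : nat -> 'I_3 -> R) m :
  (forall m : nat, (2 <= m)%N -> symNE m (sigma m)) -> (3 <= m)%N ->
  0 <= 1 - Num.max (sigma m obR) (Num.max (sigma m obP) (sigma m obS)) /\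
  (1 - Num.max (sigma m obR) (Num.max (sigma m obP) (sigma m obS))) ^+ 2
     * (m%:R - 2) <= 27.
Proof.
move=> hNE hm.
have ne := hNE m (ltnW hm).
have [[sg0 sg1] _] := ne.
have m0 : (0 < m)%N by apply: leq_trans hm.
have es := @W_eq _ _ m0 _ ne obS; rewrite (@WS _ _ m0) in es.
have ep := @W_eq _ _ m0 _ ne obP; rewrite (@WP _ _ m0) in ep.
rewrite sum3 in sg1.
have r0 := sg0 obR; have p0 := sg0 obP; have s0 := sg0 obS.
move: r0 p0 s0 sg1 es ep; set r := sigma m obR; set p := sigma m obP; set s := sigma m obS.
move=> r0 p0 s0 sg1 es ep; clearbody r p s; clear sg0 m0.
split.
  rewrite subr_ge0 !ge_max; apply/and3P; split; lra.
case: m hm {ne hNE} es ep => [|[|[|k]]] // _ es ep.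
have -> : k.+3%:R - 2 = k.+1%:R :> R.
  by rewrite -(addn2 k.+1) natrD addrK.
exact: (@keybound _ k r p s r0 p0 s0 sg1 (esym es) (esym ep)).
Qed.

Theorem mainTheorem3 (R : realType) (sigma : nat -> 'I_3 -> R) :
  (forall m : nat, (2 <= m)%N -> symNE m (sigma m)) ->
  (fun m : nat => Num.max (sigma m obR) (Num.max (sigma m obP) (sigma m obS)))
    @ \oo --> (1 : R).
Proof.
move=> hNE; apply/cvgrPdist_lt => e e0.
near=> n.
have hn3 : (3 <= n)%N by near: n; exact: nbhs_infty_ge.
have hnr : 27 / e ^+ 2 + 3 <= n%:R by near: n; exact: nbhs_infty_ger.
have [h0 h1] := @bound_m _ _ n hNE hn3.
set M := Num.max _ _ in h0 h1 *.
rewrite ger0_norm //.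
rewrite ltNge; apply/negP => he.
have e2 : 0 < e ^+ 2 by rewrite exprn_gt0.
have h2 : e ^+ 2 <= (1 - M) ^+ 2 by rewrite lerXn2r // nnegrE ltW.
have h3 : 27 / e ^+ 2 < n%:R - 2 by lra.
have h5 : 0 <= 27 / e ^+ 2 by rewrite divr_ge0 // ltW.
have h4 : 27 < e ^+ 2 * (n%:R - 2).
  by rewrite -(ltr_pM2l e2) mulrCA mulfV ?gt_eqF // mulr1 in h3.
have : e ^+ 2 * (n%:R - 2) <= (1 - M) ^+ 2 * (n%:R - 2).
  by rewrite ler_wpM2r //; lra.
lra.
Unshelve. all: end_near.
Qed.
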